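(* Let $D=(E,\mathcal{F})$ be a proper set system, $a,b\in E$ with $a\neq b$, and let $A\subseteq E$ satisfy $|A\cap\{a,b\}|=1$. Then $\omega(D*A)=\omega(D'_{ab}*A)$.
   Context: A set system $D=(E,\mathcal{F})$ is a finite set $E$ together with a collection $\mathcal{F}$ of subsets of $E$ (feasible sets); proper means $\mathcal{F}\neq\emptyset$. $\triangle$ denotes symmetric difference. For $A\subseteq E$, the twist is $D*A=(E,\{A\triangle X: X\in\mathcal{F}\})$. The width $\omega(D)$ of a proper set system is the size of a largest feasible set minus the size of a smallest feasible set. For distinct $a,b\in E$, the result of exchanging handle ends of $a$ and $b$ is $D'_{ab}=(E,\mathcal{F}'_{ab})$ with $\mathcal{F}'_{ab}=\mathcal{F}\triangle\{F\cup\{a,b\}\mid F\in\mathcal{F},\ F\subseteq E\setminus\{a,b\}\}$. *)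

(* Defs.v *)
From mathcomp Require Import all_boot.
Set Implicit Arguments. Unset Strict Implicit. Unset Printing Implicit Defensive.

(* A set system D = (E, F): ground set = a finType E, feasible sets F : {set {set E}}. *)

Definition symd (E : finType) (A B : {set E}) : {set E} := (A :\: B) :|: (B :\: A).

Definition proper_ss (E : finType) (F : {set {set E}}) : Prop := F != set0.

Definition twist (E : finType) (F : {set {set E}}) (A : {set E}) : {set {set E}} :=
  [set symd A X | X in F].

(* width: size of largest feasible set minus size of smallest feasible set
   (the min is taken with neutral element #|E|, an upper bound for all sizes) *)
Definition width (E : finType) (F : {set {set E}}) : nat :=
  (\max_(X in F) #|X|) - \big[minn/#|E|]_(X in F) #|X|.

Definition exch (E : finType) (F : {set {set E}}) (a b : E) : {set {set E}} :=
  symd F [set X :|: [set a; b] | X in [set Y in F | Y \subset ~: [set a; b]]].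

(* Main.v *)
Require Import Defs.
From mathcomp Require Import all_boot.

Lemma in_symd (T : finType) (A B : {set T}) x : (x \in symd A B) = (x \in A) (+) (x \in B).
Proof. by rewrite /symd !inE; case: (x \in A); case: (x \in B). Qed.

Lemma symdK (T : finType) (A B : {set T}) : symd A (symd A B) = B.
Proof. by apply/setP => x; rewrite !in_symd; case: (x \in A); case: (x \in B). Qed.

Lemma max_le (E : finType) (F1 F2 : {set {set E}}) :
  (forall X, X \in F1 -> exists2 Y, Y \in F2 & #|Y| = #|X|) ->
  \max_(X in F1) #|X| <= \max_(X in F2) #|X|.
Proof.
move=> H; apply/bigmax_leqP => X XF; have [Y YF <-] := H X XF.
by rewrite (bigD1 Y) //= leq_maxl.
Qed.

Lemma min_le_seq (I : eqType) (r : seq I) (P : pred I) (f : I -> nat) n y :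
  y \in r -> P y -> \big[minn/n]_(i <- r | P i) f i <= f y.
Proof.
elim: r => // x r IH; rewrite inE big_cons => /orP[/eqP <- Py|yr Py].
  by rewrite Py geq_min leqnn.
case: (P x); last exact: IH.
by rewrite geq_min IH ?orbT.
Qed.

Lemma min_ge (E : finType) (F1 F2 : {set {set E}}) :
  (forall X, X \in F1 -> exists2 Y, Y \in F2 & #|Y| = #|X|) ->
  \big[minn/#|E|]_(X in F2) #|X| <= \big[minn/#|E|]_(X in F1) #|X|.
Proof.
move=> H; apply: (big_ind (fun m => \big[minn/#|E|]_(X in F2) #|X| <= m)).
- apply: (big_ind (fun m => m <= #|E|)) => //.
  + by move=> x y hx _; rewrite geq_min hx.
  + by move=> x _; exact: max_card.
- by move=> x y hx hy; rewrite leq_min hx hy.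
- move=> X XF; have [Y YF <-] := H X XF.
  by apply: min_le_seq; rewrite ?mem_index_enum.
Qed.

Lemma width_eq (E : finType) (F1 F2 : {set {set E}}) :
  (forall X, X \in F1 -> exists2 Y, Y \in F2 & #|Y| = #|X|) ->
  (forall X, X \in F2 -> exists2 Y, Y \in F1 & #|Y| = #|X|) ->
  width F1 = width F2.
Proof.
move=> H1 H2; rewrite /width.
have -> : \max_(X in F1) #|X| = \max_(X in F2) #|X|.
  by apply/eqP; rewrite eqn_leq !max_le.
have -> : \big[minn/#|E|]_(X in F1) #|X| = \big[minn/#|E|]_(X in F2) #|X|.
  by apply/eqP; rewrite eqn_leq !min_ge.
by [].
Qed.

Lemma card_swap (E : finType) (A Y : {set E}) (a b : E) :
  a != b -> a \in A -> b \notin A -> a \notin Y -> b \notin Y ->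
  #|symd A (Y :|: [set a; b])| = #|symd A Y|.
Proof.
move=> ab aA bA aY bY.
have -> : symd A (Y :|: [set a; b]) = b |: (symd A Y :\ a).
  apply/setP => x; rewrite !(in_symd, inE).
  have [->|xa] := eqVneq x a; rewrite ?aA ?(negbTE aY) ?(negbTE ab) ?eqxx //=.
  have [->|xb] := eqVneq x b; rewrite ?(negbTE bA) ?(negbTE bY) ?eqxx ?orbT //=.
  by rewrite !orbF.
rewrite cardsU1 !(in_symd, inE) (negbTE bA) (negbTE bY) andbF add1n.
by rewrite [in RHS](cardsD1 a) in_symd aA (negbTE aY).
Qed.

Lemma main (E : finType) (F : {set {set E}}) (a b : E) (A : {set E}) :
  a != b -> a \in A -> b \notin A ->
  width (twist F A) = width (twist (exch F a b) A).
Proof.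
move=> ab aA bA.
set G := [set X :|: [set a; b] | X in [set Y in F | Y \subset ~: [set a; b]]].
have inex X : (X \in exch F a b) = (X \in F) (+) (X \in G) by rewrite /exch in_symd.
have inG X : X \in G -> exists2 Y, Y \in F &
   [/\ a \notin Y, b \notin Y & X = Y :|: [set a; b]].
  move/imsetP=> [Y]; rewrite inE => /andP[YF /subsetP sub] ->.
  exists Y => //; split => //.
    by apply/negP => /sub; rewrite !inE eqxx.
  by apply/negP => /sub; rewrite !inE eqxx orbT.
have notG (Y : {set E}) : a \notin Y -> Y \notin G.
  by move=> aY; apply/negP => /inG [Z _ [_ _ eq]]; move: aY; rewrite eq !inE eqxx orbT.
apply: width_eq => _ /imsetP [X XF ->].
- case XF': (X \in exch F a b).
    by exists (symd A X) => //; apply/imsetP; exists X.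
  move: XF'; rewrite inex XF /= => /negbFE /inG [Y YF [aY bY eq]].
  exists (symd A Y); last by rewrite eq card_swap.
  apply/imsetP; exists Y => //; by rewrite inex YF (negbTE (notG _ aY)).
- case XF': (X \in F).
    by exists (symd A X) => //; apply/imsetP; exists X.
  move: XF; rewrite inex XF' /= => /inG [Y YF [aY bY eq]].
  exists (symd A Y); last by rewrite eq card_swap.
  by apply/imsetP; exists Y.
Qed.

Theorem proposition3p5 (E : finType) (F : {set {set E}}) (a b : E) (A : {set E}) :
  proper_ss F -> a != b -> #|A :&: [set a; b]| = 1 ->
  width (twist F A) = width (twist (exch F a b) A).
Proof.
move=> _ ab hc.
case aA: (a \in A); case bA: (b \in A).
- move: hc; have -> : A :&: [set a; b] = [set a; b].
    by apply/setIidPr/subsetP => x; rewrite !inE => /orP[]/eqP->.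
  by rewrite cards2 ab.
- by apply: main => //; rewrite bA.
- have -> : exch F a b = exch F b a by rewrite /exch [[set a; b]]setUC.
  by apply: main; rewrite 1?eq_sym ?aA.
- move: hc; have -> : A :&: [set a; b] = set0.
    by apply/setP => x; rewrite !inE; case: eqP => [->|]; rewrite ?aA //; case: eqP => [->|]; rewrite ?bA ?andbF.
  by rewrite cards0.
Qed.
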